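(* Let $q \in Q$ and suppose $R_q$ consists of a single simple path. Then the polytope $\bar{P}(\mathcal{C}_q) = \{ (x,y) \in [0,1]^{|N|+1} : \sum_{j \in S} x_j \ge y \ \forall S \in \mathcal{C}_q\}$ is integral, i.e., all its vertices are integral.
   Context: Let $G=(N,A)$ be a finite undirected graph with edge lengths $\ell_e > 0$, and let $d>0$ be the travel range, with $\ell_e \le d$ for every edge. A path is a sequence $r=(v_0,v_1,\dots,v_m)$, $m\ge 1$, of nodes in which consecutive nodes are joined by an edge (nodes may repeat); $r$ is simple if its nodes are distinct. For $x \in \{0,1\}^N$ ($x_j = 1$ meaning a charging station at node $j$), path $r$ is repeatedly traversable under $x$ if, letting $W=(v_0,\dots,v_m,v_{m-1},\dots,v_0)$ be the round trip along $r$ (same path out and back), at least one node of $r$ has $x_j=1$ and, in the infinite periodic repetition of $W$, the distance travelled between any two consecutive visits to nodes with a station is at most $d$. Let $Q$ be a finite set of demands; each $q\in Q$ has a finite nonempty set $R_q$ of paths. For each $q \in Q$ and $r \in R_q$, $\mathcal{D}_{q,r}\subseteq 2^N$ is a family of node sets such that for every $x \in \{0,1\}^N$: $r$ is repeatedly traversable under $x$ if and only if $\sum_{j\in S} x_j \ge 1$ for all $S \in \mathcal{D}_{q,r}$. Define $\mathcal{C}_q = \{ \bigcup_{r \in R_q} S_r : S_r \in \mathcal{D}_{q,r} \text{ for each } r \in R_q\}$. *)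

(* Defs.v *)
From HB Require Import structures.
From mathcomp Require Import all_boot all_order all_algebra.
From mathcomp Require Import reals.
Set Implicit Arguments. Unset Strict Implicit. Unset Printing Implicit Defensive.
Import Order.TTheory GRing.Theory Num.Theory.
Local Open Scope ring_scope.

Section Defs.
Variables (R : realType) (N : finType).

Definition is_path (adj : rel N) (r : seq N) : bool :=
  if r is v0 :: s then (0 < size s)%N && path adj v0 s else false.

(* One period of the round trip (v0,..,vm,v_{m-1},..,v1) (back at v0 closes it). *)
Definition roundtrip (r : seq N) : seq N := r ++ behead (rev (behead r)).

Definition rt_node (r : seq N) (v0 : N) (i : nat) : N :=
  nth v0 (roundtrip r) (i %% size (roundtrip r)).

Definition traversable (ell : N -> N -> R) (d : R) (x : {ffun N -> bool})
    (r : seq N) : Prop :=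
  has x r /\
  forall v0 (i k : nat), (0 < k)%N ->
    x (rt_node r v0 i) -> x (rt_node r v0 (i + k)) ->
    (forall t, (0 < t < k)%N -> ~~ x (rt_node r v0 (i + t))) ->
    \sum_(t < k) ell (rt_node r v0 (i + t)) (rt_node r v0 (i + t).+1) <= d.

Definition Cq (paths : seq (seq N)) (D : seq N -> {set {set N}})
    (S : {set N}) : Prop :=
  exists f : seq N -> {set N},
    (forall r, r \in paths -> f r \in D r) /\ S = \bigcup_(r <- paths) f r.

Definition Pbar (C : {set N} -> Prop) (x : {ffun N -> R}) (y : R) : Prop :=
  (forall j, 0 <= x j <= 1) /\ 0 <= y <= 1 /\
  forall S, C S -> y <= \sum_(j in S) x j.

Definition is_vertex (P : {ffun N -> R} -> R -> Prop) (x : {ffun N -> R}) (y : R)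
  : Prop :=
  P x y /\
  forall (x1 x2 : {ffun N -> R}) (y1 y2 t : R),
    P x1 y1 -> P x2 y2 -> 0 < t < 1 ->
    x = [ffun j => t * x1 j + (1 - t) * x2 j] -> y = t * y1 + (1 - t) * y2 ->
    x1 = x2 /\ y1 = y2.

Definition integral_polytope (P : {ffun N -> R} -> R -> Prop) : Prop :=
  forall x y, is_vertex P x y -> (forall j, x j \is a Num.int) /\ y \is a Num.int.

End Defs.

(* Main.v *)
Require Import Defs.
From HB Require Import structures.
From mathcomp Require Import all_boot all_order all_algebra.
From mathcomp Require Import reals.
From mathcomp Require Import ring lra zify.
From Stdlib Require Import Classical.
Import Order.TTheory GRing.Theory Num.Theory.
Set Implicit Arguments. Unset Strict Implicit. Unset Printing Implicit Defensive.
Local Open Scope ring_scope.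

Definition idxf (m q : nat) : nat := if (q <= m)%N then q else (2 * m - q)%N.
Definition gf (n p : nat) : nat := idxf n.-1 (p %% (2 * n.-1)).

Lemma rt_size (T : Type) (r : seq T) : (1 < size r)%N ->
  size (r ++ behead (rev (behead r))) = (2 * (size r).-1).
Proof. move=> h; rewrite size_cat size_behead size_rev size_behead; lia. Qed.

Lemma rt_nth (T : Type) (r : seq T) v0 q : (1 < size r)%N ->
  (q < (2 * (size r).-1))%N ->
  nth v0 (r ++ behead (rev (behead r))) q = nth v0 r (idxf (size r).-1 q).
Proof.
move=> h hq; rewrite nth_cat /idxf.
case: ifP => hq1.
  by have -> : (q <= (size r).-1)%N by lia.
have -> : (q <= (size r).-1)%N = false by lia.
rewrite nth_behead nth_rev; last by rewrite size_behead; lia.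
rewrite nth_behead size_behead; congr nth; lia.
Qed.

Lemma gf_lt n p : (1 < n)%N -> (gf n p < n)%N.
Proof.
move=> h; rewrite /gf /idxf.
have : (p %% (2 * n.-1) < (2 * n.-1))%N by rewrite ltn_mod; lia.
case: ifP => ?; lia.
Qed.

Lemma gf_step n p : (1 < n)%N ->
  (gf n p.+1 <= (gf n p).+1)%N /\ (gf n p <= (gf n p.+1).+1)%N.
Proof.
move=> h; rewrite /gf /idxf modnS.
have hm : (p %% (2 * n.-1) < (2 * n.-1))%N by rewrite ltn_mod; lia.
case hd: (2 * n.-1 %| p.+1)%N.
  have hL : (p %% (2 * n.-1) = (2 * n.-1).-1)%N.
    have h0 : ((p %% (2 * n.-1) + 1) %% (2 * n.-1) = 0)%N.
      by rewrite modnDml addn1; exact/eqP.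
    case: (ltnP (p %% (2 * n.-1) + 1) (2 * n.-1)) => hc.
      by rewrite modn_small in h0 => //; lia.
    lia.
  by rewrite hL leq0n; repeat (case: ifP => ?); lia.
repeat (case: ifP => ?); lia.
Qed.

Lemma ivt (f : nat -> nat) :
  (forall p, (f p.+1 <= (f p).+1)%N /\ (f p <= (f p.+1).+1)%N) ->
  forall p1 d v, ((f p1 <= v)%N /\ (v <= f (p1 + d))%N) \/
                 ((f (p1 + d) <= v)%N /\ (v <= f p1)%N) ->
  exists t, (t <= d)%N /\ f (p1 + t)%N = v.
Proof.
move=> H p1; elim=> [|d IH] v hv.
  exists 0%N; split => //; rewrite addn0 in hv *; lia.
have := H (p1 + d)%N; rewrite -addnS => hs.
have [h|h] : (((f p1 <= v)%N /\ (v <= f (p1 + d))%N) \/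
                 ((f (p1 + d) <= v)%N /\ (v <= f p1)%N))
   \/ v = f (p1 + d.+1)%N by lia.
  by have [t [ht1 ht2]] := IH v h; exists t; split => //; lia.
by exists d.+1; split.
Qed.

Definition Wset (N : finType) (r : seq N) (a b : nat) : {set N} :=
  [set j | (a <= index j r < b)%N].
Definition complf (N : finType) (A : {set N}) : {ffun N -> bool} :=
  [ffun j => j \notin A].

Lemma rt_node_gf (N : finType) (r : seq N) v0 p : (1 < size r)%N ->
  rt_node r v0 p = nth v0 r (gf (size r) p).
Proof.
move=> h; rewrite /rt_node /roundtrip rt_size // rt_nth // ltn_mod; lia.
Qed.

Lemma KC (R : realType) (N : finType) (ell : N -> N -> R) (d : R)
  (r : seq N) (Dr : {set {set N}}) :
  uniq r -> (1 < size r)%N ->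
  (forall x : {ffun N -> bool}, traversable ell d x r <->
     (forall S, S \in Dr -> (1 <= \sum_(j in S) nat_of_bool (x j))%N)) ->
  forall S, S \in Dr -> exists a b, (a <= b <= size r)%N /\
    Wset r a b \subset S /\ exists2 S', S' \in Dr & S' \subset Wset r a b.
Proof.
move=> hu hs heq.
have ntr : forall S, S \in Dr -> ~ traversable ell d (complf S) r.
  move=> S hS /heq h; have := h S hS.
  by rewrite big1 // => j hj; rewrite ffunE hj.
have ext : forall W, ~ traversable ell d (complf W) r ->
    exists2 S', S' \in Dr & S' \subset W.
  move=> W nt; apply: NNPP => hn; apply: nt; apply/heq => S hS.
  case: (leqP 1 (\sum_(j in S) nat_of_bool (complf W j))) => // h0.
  exfalso; apply: hn; exists S => //; apply/subsetP => j hj.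
  have : (\sum_(j in S) nat_of_bool (complf W j) == 0)%N by lia.
  rewrite sum_nat_eq0 => /forallP/(_ j)/implyP/(_ hj).
  by rewrite ffunE; case: (j \in W).
move=> S hS; have nt := ntr S hS; set x := complf S.
case hx: (has x r); last first.
  exists 0%N, (size r); split; first by lia.
  have WS : Wset r 0 (size r) \subset S.
    apply/subsetP => j; rewrite inE /= index_mem => jr.
    move/hasPn: (negbT hx) => /(_ j jr); rewrite ffunE; by case: (j \in S).
  split => //; apply: ext => -[tr _].
  move/hasP: tr => [j jr]; rewrite ffunE inE /= index_mem jr //.
have : ~ (forall v0 i k, (0 < k)%N ->
    x (rt_node r v0 i) -> x (rt_node r v0 (i + k)) ->
    (forall t, (0 < t < k)%N -> ~~ x (rt_node r v0 (i + t))) ->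
    \sum_(t < k) ell (rt_node r v0 (i + t)) (rt_node r v0 (i + t).+1) <= d).
  by move=> H; apply: nt; split.
move/not_all_ex_not => [v0]; move/not_all_ex_not => [i].
move/not_all_ex_not => [k].
move=> H; have [hk H1] := imply_to_and _ _ H.
have [h1 H2] := imply_to_and _ _ H1.
have [h2 H3] := imply_to_and _ _ H2.
have [h3 h4] := imply_to_and _ _ H3.
clear H H1 H2 H3.
have addE : forall a b : nat, (a + b)%R = (a + b)%N by [].

set n := size r.
have hnode : forall p, rt_node r v0 p = nth v0 r (gf n p) by move=> p; exact: rt_node_gf.
have WSgen : forall a b, Wset r a b \subset S -> (forall p, x (rt_node r v0 p) ->
    rt_node r v0 p \notin Wset r a b).
  move=> a b WS p; rewrite /x ffunE => hp; apply/negP => hin.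
  by move: hp; rewrite (subsetP WS _ hin).
case: (ltnP 1 k) => hk2; last first.
  have W0 : Wset r 0 0 \subset S by apply/subsetP => j; rewrite inE; lia.
  exists 0%N, 0%N; split; first by lia.
  split => //; apply: ext => -[_ tr]; apply: h4.
  have := tr v0 i k hk; apply.
  - by rewrite ffunE; apply: WSgen.
  - by rewrite ffunE; apply: WSgen.
  - move=> t ht; lia.
pose P c := [exists t : 'I_k, (0 < t)%N && (gf n (i + t)%N == c)].
have exP : exists c, P c.
  by exists (gf n (i + 1)%N); apply/existsP; exists (Ordinal hk2); rewrite /= eqxx.
have bP : forall c, P c -> (c <= n)%N.
  move=> c /existsP [t /andP [_ /eqP <-]]; apply: ltnW; exact: gf_lt.
case: (ex_minnP exP) => lo Plo lomin.
case: (ex_maxnP exP bP) => hi Phi himax.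
have Pin : forall t, (0 < t < k)%N -> (lo <= gf n (i + t) <= hi)%N.
  move=> t ht; apply/andP; split; [apply: lomin | apply: himax];
  by apply/existsP; exists (Ordinal (proj2 (andP ht))); rewrite /= eqxx (proj1 (andP ht)).
have hin : forall c, (lo <= c <= hi)%N -> exists t, (0 < t < k)%N /\ gf n (i + t)%N = c.
  move=> c hc.
  move/existsP: Plo => [t1 /andP [t1p /eqP e1]].
  move/existsP: Phi => [t2 /andP [t2p /eqP e2]].
  have hst : forall p, (gf n p.+1 <= (gf n p).+1)%N /\ (gf n p <= (gf n p.+1).+1)%N.
    by move=> p; apply: gf_step.
  have := ltn_ord t1; have := ltn_ord t2 => lt2 lt1.
  case: (leqP t1 t2) => h12.
    have e3 : (i + t1 + (t2 - t1) = i + t2)%N by lia.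
    have [|t [ht e]] := @ivt _ hst (i + t1)%N (t2 - t1)%N c.
      by rewrite e3 e1 e2; left; lia.
    by exists (t1 + t)%N; split; [lia | rewrite addnA].
  have e3 : (i + t2 + (t1 - t2) = i + t1)%N by lia.
  have [|t [ht e]] := @ivt _ hst (i + t2)%N (t1 - t2)%N c.
    by rewrite e3 e1 e2; right; lia.
  by exists (t2 + t)%N; split; [lia | rewrite addnA].
have hilt : (hi < n)%N.
  by move/existsP: Phi => [t /andP [_ /eqP <-]]; apply: gf_lt.
have lohi : (lo <= hi)%N by apply: lomin.
have WS : Wset r lo hi.+1 \subset S.
  apply/subsetP => j; rewrite inE => /andP [hl hh].
  have [|t [ht e]] := hin (index j r); first by rewrite hl /= -ltnS.
  have jr : j \in r by rewrite -index_mem -/n; lia.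
  by have := h3 t ht; rewrite hnode e nth_index // /x ffunE; case: (j \in S).
exists lo, hi.+1; split; first by lia.
split => //; apply: ext => -[_ tr]; apply: h4; apply: (tr v0 i k hk).
- by rewrite ffunE; apply: WSgen.
- by rewrite ffunE; apply: WSgen.
- move=> t ht; rewrite ffunE negbK hnode inE index_uniq //; last exact: gf_lt.
  by have := Pin t ht; lia.
Qed.

Lemma sub_sum (R : realType) (N : finType) (A B : {set N}) (F : N -> R) :
  A \subset B -> (forall j, 0 <= F j) ->
  \sum_(j in A) F j <= \sum_(j in B) F j.
Proof.
move=> AB hF; rewrite [X in _ <= X](big_setID A) /= (setIidPr AB).
by rewrite lerDl sumr_ge0.
Qed.

Lemma sumW (R : realType) (N : finType) (r : seq N) (v : N) a b (F : N -> R) :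
  uniq r -> (a <= b <= size r)%N ->
  \sum_(j in Wset r a b) F j =
  \sum_(0 <= c < b) F (nth v r c) - \sum_(0 <= c < a) F (nth v r c).
Proof.
move=> hu hab.
rewrite -big_enum (perm_big [seq j <- r | (a <= index j r < b)%N]); last first.
  apply: uniq_perm; [exact: enum_uniq | exact: filter_uniq |].
  move=> j; rewrite mem_enum mem_filter inE.
  case/boolP: (a <= index j r < b)%N => //= h; apply/esym; rewrite -index_mem.
  exact: leq_trans (proj2 (andP h)) (proj2 (andP hab)).
rewrite big_filter (big_nth v).
have -> : \sum_(0 <= i < size r | (a <= index (nth v r i) r < b)%N) F (nth v r i)
     = \sum_(0 <= i < size r | (a <= i < b)%N) F (nth v r i).
  rewrite big_nat_cond [RHS]big_nat_cond; apply: eq_bigl => i.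
  case/boolP: (0 <= i < size r)%N => //= hi; rewrite index_uniq //; lia.
rewrite [X in _ = X - _](bigID (fun c => (c < a)%N)) /=.
rewrite (@big_nat_widen _ _ _ 0 a b) ?(proj1 (andP hab)) //.
rewrite (@big_nat_widen _ _ _ 0 b (size r)) ?(proj2 (andP hab)) //.
rewrite addrC addrK [RHS](@big_nat_widen _ _ _ 0 b (size r)) ?(proj2 (andP hab)) //.
apply: eq_bigl => c; rewrite -leqNgt; lia.
Qed.

Lemma finmin (R : realType) (T : finType) (F : T -> R) :
  (forall t, 0 < F t) -> exists2 e, 0 < e & forall t, e <= F t.
Proof.
move=> hF.
suff [e he1 he2] : exists2 e, 0 < e & forall t, t \in enum T -> e <= F t.
  by exists e => // t; apply: he2; rewrite mem_enum.
elim: (enum T) => [|t s [e he1 he2]]; first by exists 1.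
exists (Num.min (F t) e); first by rewrite lt_min hF he1.
move=> u; rewrite inE => /orP [/eqP ->|hu]; rewrite ge_min ?lexx //.
by rewrite he2 // orbT.
Qed.

Definition frac (R : realType) (w : R) : R := w - (Num.floor w)%:~R.

Lemma frac_ge (R : realType) (w : R) (c : int) : c%:~R <= w -> c%:~R <= w - frac w.
Proof.
move=> h; rewrite /frac opprB addrC subrK ler_int floor_ge_int //.
Qed.

Lemma frac_pos (R : realType) (w : R) : ~~ (w \is a Num.int) -> 0 < frac w.
Proof.
move=> h; rewrite /frac lt_neqAle subr_ge0 floor_le andbT.
apply: contra h; rewrite eq_sym subr_eq0 => /eqP e.
by rewrite intrEfloor -e.
Qed.

Lemma real_main (R : realType) (N : finType) (r : seq N) (v : N)
  (C : {set N} -> Prop) :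
  uniq r ->
  (forall S, C S -> exists a b, (a <= b <= size r)%N /\
    Wset r a b \subset S /\ exists2 S', C S' & S' \subset Wset r a b) ->
  @integral_polytope R N (@Pbar R N C).
Proof.
move=> hu hC x y [[hx [hy hcons]] hext].
set n := size r.
have via : forall x' : {ffun N -> R}, (forall j, 0 <= x' j <= 1) ->
    (y = 0 \/ forall a b, (a <= b <= n)%N ->
       y <= \sum_(j in Wset r a b) x j -> y <= \sum_(j in Wset r a b) x' j) ->
    Pbar C x' y.
  move=> x' hx' hw; split => //; split => // S hS.
  have x'0 : forall j, 0 <= x' j by move=> j; case/andP: (hx' j).
  have x0 : forall j, 0 <= x j by move=> j; case/andP: (hx j).
  case: hw => [->|hw]; first by rewrite sumr_ge0.
  have [a [b [hab [WS [S' hS' S'W]]]]] := hC S hS.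
  apply: le_trans (sub_sum WS x'0); apply: hw => //.
  exact: le_trans (hcons S' hS') (sub_sum S'W x0).
have x0 : forall j, 0 <= x j by move=> j; case/andP: (hx j).
have x1 : forall j, x j <= 1 by move=> j; case/andP: (hx j).
have hy01 : y = 0 \/ y = 1.
  case: (eqVneq y 0) => [->|y0]; first by left.
  case: (eqVneq y 1) => [->|y1]; first by right.
  exfalso; case/andP: hy => hy0 hy1.
  have ylt0 : 0 < y by rewrite lt_neqAle eq_sym y0.
  have ylt1 : y < 1 by rewrite lt_neqAle y1.
  have y1' : 1 - y != 0 by rewrite subr_eq0 eq_sym.
  have y1p : 0 < 1 - y by rewrite subr_gt0.
  pose b := [ffun j => if y <= x j then 1 else x j / y].
  pose a := [ffun j => if y <= x j then (x j - y) / (1 - y) else 0].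
  have b0 : forall j, 0 <= b j.
    by move=> j; rewrite ffunE; case: ifP => // _; rewrite divr_ge0 // ltW.
  have a0 : forall j, 0 <= a j.
    by move=> j; rewrite ffunE; case: ifP => // h; apply: divr_ge0; rewrite subr_ge0.
  have := hext b a 1 0 y.
  case.
  - split.
      move=> j; rewrite b0 /= ffunE; case: ifP => // /negbT; rewrite -ltNge => h.
      by rewrite ler_pdivrMr // mul1r ltW.
    split; first by rewrite lexx ler01.
    move=> S hS; have hyS := hcons S hS.
    case/boolP: [exists j in S, y <= x j].
      move/existsP => [j /andP [jS hj]].
      rewrite (bigD1 j) //= {1}ffunE hj lerDl sumr_ge0 //.
    rewrite negb_exists => /forallP hS'.
    rewrite (eq_bigr (fun j => x j / y)); last first.
      move=> j jS; have := hS' j; rewrite jS /= ffunE => /negbTE -> //.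
    by rewrite -mulr_suml ler_pdivlMr // mul1r.
  - split.
      move=> j; rewrite a0 /= ffunE; case: ifP => h; last exact: ler01.
      by rewrite ler_pdivrMr // mul1r lerD2r.
    split; first by rewrite lexx ler01.
    by move=> S _; rewrite sumr_ge0.
  - by rewrite ylt0 ylt1.
  - apply/ffunP => j; rewrite !ffunE; case: ifP => h.
      by field.
    by field; rewrite y0.
  - by rewrite mulr1 mulr0 addr0.
  - by move=> _ /eqP; rewrite oner_eq0.
split; last by case: hy01 => ->; [exact: rpred0 | exact: rpred1].
have offpath : forall j, j \notin r -> x j \is a Num.int.
  move=> j0 jr; case: (boolP (x j0 \is a Num.int)) => // nint; exfalso.
  have lt0 : 0 < x j0.
    rewrite lt_neqAle x0 andbT; apply: contra nint => /eqP <-; exact: rpred0.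
  have lt1 : x j0 < 1.
    rewrite lt_neqAle x1 andbT; apply: contra nint => /eqP ->; exact: rpred1.
  pose xa := [ffun j => if j == j0 then 1 else x j].
  pose xb := [ffun j => if j == j0 then 0 else x j].
  have viaW : forall xc : {ffun N -> R}, (forall j, 0 <= xc j <= 1) ->
      (forall j, j != j0 -> xc j = x j) -> Pbar C xc y.
    move=> xc hxc he; apply: via => //; right => a b hab hw.
    rewrite (eq_bigr x) // => j; rewrite inE => hj; apply: he.
    apply: contraTneq hj => ->; rewrite memNindex // -/n; lia.
  have := hext xa xb y y (x j0).
  case.
  - apply: viaW; last by move=> j; rewrite ffunE => /negbTE ->.
    by move=> j; rewrite ffunE; case: ifP => _; rewrite ?lexx ?ler01 ?hx.
  - apply: viaW; last by move=> j; rewrite ffunE => /negbTE ->.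
    by move=> j; rewrite ffunE; case: ifP => _; rewrite ?lexx ?ler01 ?hx.
  - by rewrite lt0 lt1.
  - apply/ffunP => j; rewrite !ffunE; case: eqP => [->|_]; ring.
  - ring.
  - by move=> e _; have := congr1 (fun f : {ffun N -> R} => f j0) e; rewrite /= !ffunE eqxx => /eqP; rewrite oner_eq0.
pose z k := \sum_(0 <= c < k) x (nth v r c).
have z0 : z 0%N = 0 by rewrite /z big_geq.
have xz : forall c, (c < n)%N -> x (nth v r c) = z c.+1 - z c.
  by move=> c hc; rewrite /z big_nat_recr //= addrC addrK.
have zint : forall k, (k <= n)%N -> z k \is a Num.int.
  move=> k0 hk0; case: (boolP (z k0 \is a Num.int)) => // nint; exfalso.
  pose K k := (z k - z k0) \is a Num.int.
  have K0 : ~~ K 0%N by rewrite /K z0 sub0r rpredN.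
  have Kk0 : K k0 by rewrite /K subrr rpred0.
  have nonint : forall k l, K k -> ~~ K l -> ~~ ((z k - z l) \is a Num.int).
    move=> k l hk hl; apply: contra hl => hkl.
    have e1 : z l - z k0 = (z k - z k0) - (z k - z l) by ring.
    by rewrite /K e1 rpredB.
  pose F (p : 'I_n.+1 * 'I_n.+1) := if K p.1 && ~~ K p.2 then
     Num.min (frac (z p.1 - z p.2)) (frac (z p.2 - z p.1)) else 1.
  have [e e0 he] : exists2 e, 0 < e & forall p, e <= F p.
    apply: finmin => -[k l]; rewrite /F /=; case/boolP: (K k && ~~ K l) => // /andP [hk hl].
    have nn1 := nonint k l hk hl.
    have nn2 : ~~ ((z l - z k) \is a Num.int) by rewrite -opprB rpredN.
    by rewrite lt_min !frac_pos.
  have epsP : forall u w, (u <= n)%N -> (w <= n)%N -> K u -> ~~ K w ->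
      e <= frac (z u - z w) /\ e <= frac (z w - z u).
    move=> u w hu' hw' ku kw.
    have := he (Ordinal (hu' : (u < n.+1)%N), Ordinal (hw' : (w < n.+1)%N)).
    by rewrite /F /= ku kw /= le_min => /andP.
  have shift : forall s : R, (s = 1 \/ s = -1) -> forall u w (c : int),
      (u <= n)%N -> (w <= n)%N -> c%:~R <= z u - z w ->
      c%:~R <= (z u + s * e * (K u)%:R) - (z w + s * e * (K w)%:R).
    move=> s hs u w c hu' hw' hc.
    case/boolP: (K u) => ku; case/boolP: (K w) => kw /=.
    - by rewrite (_ : _ - _ = z u - z w) //; ring.
    - have [h1 _] := epsP u w hu' hw' ku kw.
      have h2 := frac_ge hc.
      by case: hs => ->; lra.
    - have [_ h1] := epsP w u hw' hu' kw ku.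
      have h2 := frac_ge hc.
      by case: hs => ->; lra.
    - by rewrite (_ : _ - _ = z u - z w) //; ring.
  have i0 : ((0:int)%:~R : R) = 0 by [].
  have i1 : ((1:int)%:~R : R) = 1 by [].
  have iN1 : ((-1:int)%:~R : R) = -1 by [].
  pose D c := (((K c.+1)%:R : R) - (K c)%:R).
  pose xs (s : R) := [ffun j => x j + (if j \in r then s * e * D (index j r) else 0)].
  have zs : forall s k, (k <= n)%N ->
      \sum_(0 <= c < k) xs s (nth v r c) = z k + s * e * (K k)%:R.
    move=> s k hk.
    rewrite (@eq_big_nat _ _ _ _ _ _ (fun c => x (nth v r c) + s * e * D c)); last first.
      move=> c hc; rewrite ffunE mem_nth ?index_uniq //; rewrite -/n; lia.
    rewrite big_split /= -mulr_sumr /D telescope_sumr // (negbTE K0) /= mulr0n subr0.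
    done.
  have xsE : forall s c, (c < n)%N ->
      xs s (nth v r c) = (z c.+1 + s * e * (K c.+1)%:R) - (z c + s * e * (K c)%:R).
    move=> s c hc; rewrite -zs // -zs ?(ltnW hc) // big_nat_recr //= addrC addrK //.
  have hbox : forall s, (s = 1 \/ s = -1) -> forall j, 0 <= xs s j <= 1.
    move=> s hs j; case/boolP: (j \in r) => jr.
      have hc : (index j r < n)%N by rewrite index_mem.
      rewrite -(nth_index v jr) xsE //; apply/andP; split.
        rewrite -i0; apply: shift => //; first exact: ltnW.
        by rewrite i0 -xz // subr_ge0 x0.
      rewrite -[_ <= 1]lerN2 opprB -iN1.
      apply: shift => //; first exact: ltnW.
      by rewrite iN1 -opprB -xz // lerN2 x1.
    by rewrite ffunE (negbTE jr) addr0 hx.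
  have hP : forall s, (s = 1 \/ s = -1) -> Pbar C (xs s) y.
    move=> s hs; apply: via; first exact: hbox.
    case: hy01 => hy1; [by left | right] => a b hab.
    rewrite !(sumW v) // hy1 !zs //; try lia.
    move=> h; rewrite -i1; apply: shift => //; try lia.
  have ht : 0 < (2^-1 : R) < 1 by apply/andP; split; lra.
  have hxe : x = [ffun j => 2^-1 * xs 1 j + (1 - 2^-1) * xs (-1) j].
    by apply/ffunP => j; rewrite !ffunE; case: (j \in r); field.
  have hye : y = 2^-1 * y + (1 - 2^-1) * y by field.
  have [ee _] := hext (xs 1) (xs (-1)) y y (2^-1) (hP 1 (or_introl erefl))
     (hP (-1) (or_intror erefl)) ht hxe hye.
  have := zs 1 k0 hk0; rewrite ee zs // Kk0 /= mulr1n => hh.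
  by move: e0; lra.

have hxi : forall j, x j \is a Num.int.
  move=> j; case/boolP: (j \in r) => jr; last exact: offpath.
  have hc : (index j r < n)%N by rewrite index_mem.
  by rewrite -(nth_index v jr) xz //; apply: rpredB; apply: zint; rewrite -/n; lia.
by [].
Qed.

Theorem proposition2 (R : realType) (N : finType) (adj : rel N)
  (ell : N -> N -> R) (d : R) (Q : Type) (Rq : Q -> seq (seq N))
  (D : Q -> seq N -> {set {set N}}) :
  symmetric adj ->
  (forall u v, ell u v = ell v u) ->
  (forall u v, adj u v -> 0 < ell u v /\ ell u v <= d) ->
  0 < d ->
  (forall q, Rq q != [::] /\
             forall r, r \in Rq q -> is_path adj r) ->
  (forall q r, r \in Rq q -> forall x : {ffun N -> bool},
     traversable ell d x r <->
     (forall S, S \in D q r -> (1 <= \sum_(j in S) nat_of_bool (x j))%N)) ->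
  forall (q : Q) (r : seq N), Rq q = [:: r] -> uniq r ->
  @integral_polytope R N (@Pbar R N (Cq (Rq q) (D q))).
Proof.
move=> hsym hell hpos hd hRq heq q r hRr hu.
have rin : r \in Rq q by rewrite hRr mem_seq1.
have [_ hpath] := hRq q.
have rp := hpath r rin.
have hs : (1 < size r)%N.
  by move: rp; case: (r) => [|v0 s] //= /andP [h _].
have [v _] : exists v : N, v \in r.
  by move: hs; case: (r) => [|v0 s] // _; exists v0; rewrite inE eqxx.
have heq' := heq q r rin.
apply: (@real_main R N r v) => // S.
rewrite /Cq hRr => -[f [hf ->]]; rewrite big_seq1.
have [a [b [hab [WS [S' hS' S'W]]]]] := KC hu hs heq' (hf r (mem_head _ _)).
exists a, b; split => //; split => //; exists S' => //.
exists (fun _ => S'); split; last by rewrite big_seq1.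
by move=> r'; rewrite mem_seq1 => /eqP ->.
Qed.
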